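(* Let $(n_k)_{k\geq1}$ be a strictly increasing sequence of positive integers, $K\geq2$, $s>1$, $\alpha\in(0,1)$, and let $$m_k=\left\lceil\frac{n_k}{\theta}\ln\left(\frac{\zeta(s)\,n_k^{s+1}}{\alpha}\right)\right\rceil,\qquad k=1,\ldots,K.$$ Let $B_2,\ldots,B_K$ be mutually independent random variables with $B_k\sim\mathrm{Bin}\left(m_k,\frac{n_k-n_{k-1}}{n_k}\right)$ (number of trials $m_k$, success probability $\frac{n_k-n_{k-1}}{n_k}$), and let $U_K=\sum_{k=2}^KB_k$. Then $$\mathrm{Var}(U_K)<\mathbb{E}(U_K)\leq m_K+n_K-m_1.$$
   Context: $\zeta$ denotes the Riemann zeta function and $\theta=\frac{3\ln(3/2)-1}{2}\approx0.108$. *)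

(* Defs.v *)
From HB Require Import structures.
From mathcomp Require Import all_boot all_order all_algebra.
From mathcomp Require Import all_classical all_reals all_analysis.
Set Implicit Arguments. Unset Strict Implicit. Unset Printing Implicit Defensive.
Import Order.TTheory GRing.Theory Num.Def Num.Theory.
Local Open Scope classical_set_scope.
Local Open Scope ring_scope.

Definition riemann_zeta {R : realType} (s : R) : R :=
  limn (fun N : nat => \sum_(0 <= i < N) ((i.+1)%:R `^ (- s))).

Definition theta {R : realType} : R := (3 * ln (3 / 2) - 1) / 2.

Definition mseq {R : realType} (s alpha : R) (n : nat -> nat) (k : nat) : int :=
  ceil ((n k)%:R / theta * ln (riemann_zeta s * ((n k)%:R `^ (s + 1)) / alpha)).

Definition mutually_independent {d} {T : measurableType d} {R : realType}
  (P : probability T R) (X : nat -> T -> R) (a b : nat) : Prop :=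
  forall A : nat -> set R, (forall k, measurable (A k)) ->
    P (\bigcap_(k in [set k : nat | (a <= k <= b)%N]) (X k @^-1` A k)) =
    (\prod_(a <= k < b.+1) P (X k @^-1` A k))%E.

(* Main.v *)
Require Import Defs.
From HB Require Import structures.
From mathcomp Require Import all_boot all_order all_algebra.
From mathcomp Require Import all_classical all_reals all_analysis.
From mathcomp Require Import ring lra.
From mathcomp Require Import measurable_realfun.
Import Order.TTheory GRing.Theory Num.Def Num.Theory.
Import numFieldNormedType.Exports.
Local Open Scope classical_set_scope.
Local Open Scope ring_scope.



Lemma theta_gt0 (R : realType) : 0 < @theta R.
Proof.
rewrite /theta; apply: divr_gt0; last by [].
have h := @expR_gt1Dx R (- (3^-1)).
have : - 3^-1 != 0 :> R by rewrite oppr_eq0 invr_eq0.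
move/h => {}h.
have e0 : 0 < expR (3^-1 : R) by apply: expR_gt0.
have hm : expR (3^-1 : R) * expR (- 3^-1) = 1 by rewrite -expRD subrr expR0.
have : expR (3^-1 : R) < 3/2 by nra.
move=> lt.
have : (3^-1 : R) < ln (3/2).
  by rewrite -ltr_expR lnK // posrE.
lra.
Qed.



Section zeta.
Variable R : realType.
Variable s : R.
Hypothesis s1 : 1 < s.

Let S (N : nat) : R := \sum_(0 <= i < N) ((i.+1)%:R `^ (- s)).

Let term_ge0 i : 0 <= (i.+1)%:R `^ (- s) :> R.
Proof. exact: powR_ge0. Qed.

Let S_nd : nondecreasing_seq S.
Proof.
apply/nondecreasing_seqP => N; rewrite /S big_nat_recr //= lerDl; exact: term_ge0.
Qed.

Let r : R := 2 `^ (1 - s).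

Let r_lt1 : r < 1.
Proof.
rewrite /r /powR (negbTE (_ : (2:R) != 0)) //.
rewrite expR_lt1; have : 0 < ln (2:R) by apply: ln_gt0; lra.
by move=> ?; rewrite pmulr_llt0 // subr_lt0.
Qed.

Let r_ge0 : 0 <= r.
Proof. exact: powR_ge0. Qed.

Let blk J : \sum_(2 ^ J <= i < 2 ^ J.+1) ((i.+1)%:R `^ (- s)) <= r ^+ J :> R.
Proof.
have h : forall i, (2 ^ J <= i)%N -> (i.+1)%:R `^ (- s) <= (2 ^ J)%:R `^ (- s) :> R.
  move=> i hi; rewrite !powRN lef_pV2 ?posrE ?powR_gt0 ?ltr0n ?expn_gt0 //.
  apply: ge0_ler_powR; rewrite ?nnegrE ?ler0n //; first exact: (ltW (lt_trans ltr01 s1)).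
  rewrite (@ler_nat R); exact: leqW.
apply: (le_trans (ler_sum_nat (fun i hi => h i (proj1 (andP hi))))).
  rewrite sumr_const_nat expnS mul2n -addnn addnK -(mulr_natl (_ `^ _) (2 ^ J)).
  have -> : (2 ^ J)%:R * ((2 ^ J)%:R `^ (- s)) = (2 ^ J)%:R `^ (1 - s) :> R.
    rewrite powRD ?powRr1 ?ler0n //.
    by apply/implyP => _; rewrite pnatr_eq0 expn_eq0.
  rewrite natrX -powR_mulrn // -powRrM mulrC powRrM powR_mulrn ?powR_ge0 //.
Qed.

Let S2 J : S (2 ^ J) <= 1 + \sum_(j < J) r ^+ j.
Proof.
elim: J => [|J IH]; first by rewrite /S expn0 big_nat1 big_ord0 powR1 addr0.
rewrite /S (big_cat_nat _ (n := 2 ^ J)) //=; last by rewrite leq_exp2l.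
by rewrite big_ord_recr /= addrA; apply: lerD => //; exact: blk.
Qed.

Let geo J : \sum_(j < J) r ^+ j <= (1 - r)^-1.
Proof.
have h := subrX1 r J.
have h1 : 0 <= r ^+ J by apply: exprn_ge0.
have pos : 0 < 1 - r by rewrite subr_gt0.
rewrite -[X in _ <= X]div1r ler_pdivlMr // mulrC.
have : (1 - r) * \sum_(j < J) r ^+ j = 1 - r ^+ J.
  by rewrite -opprB mulNr -h opprB.
move=> ->; lra.
Qed.

Lemma zeta_ge1 : 1 <= riemann_zeta s.
Proof.
have cv : cvgn S.
  apply: nondecreasing_is_cvgn => //.
  exists (1 + (1 - r)^-1) => _ [N _ <-].
  apply: (le_trans _ (lerD (lexx 1) (geo N))); apply: (le_trans _ (S2 N)).
  apply: S_nd; apply: ltnW; exact: ltn_expl.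
have := nondecreasing_cvgn_le S_nd cv 1.
by rewrite /S big_nat1 powR1.
Qed.
End zeta.

Module Aux.


Section binom.
Variable R : realType.

Lemma bin_sum1 (M : nat) (p : R) : \sum_(j < M.+1) binomial_pmf M p j = 1.
Proof.
rewrite /binomial_pmf.
have := exprDn (1 - p) p M; rewrite subrK expr1n => ->.
by apply: eq_bigr => i _; rewrite mulrC.
Qed.

Lemma pmfE (M k : nat) (p : R) :
  binomial_pmf M p k = ('C(M, k))%:R * (p ^+ k * (1 - p) ^+ (M - k)).
Proof. by rewrite /binomial_pmf mulr_natl. Qed.

Lemma bin_shift (m : nat) (p : R) (g : nat -> R) :
  \sum_(j < m.+2) j%:R * g j * binomial_pmf m.+1 p j =
  m.+1%:R * p * \sum_(j < m.+1) g j.+1 * binomial_pmf m p j.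
Proof.
rewrite big_ord_recl mul0r mul0r add0r mulr_sumr.
apply: eq_bigr => i _; rewrite !pmfE /bump /= subSS.
have e := mul_bin_diag m.+1 i.
have -> : ('C(m.+1, i.+1))%:R = (m.+1%:R * ('C(m, i))%:R) / i.+1%:R :> R.
  by rewrite -natrM e natrM mulrAC divff ?mul1r // pnatr_eq0.
have -> : bump 0 i = i.+1 by [].
rewrite exprS; field.
by rewrite addrC natr1 (@pnatr_eq0 R).
Qed.

Lemma bin_mean (M : nat) (p : R) :
  \sum_(j < M.+1) j%:R * binomial_pmf M p j = M%:R * p.
Proof.
case: M => [|m]; first by rewrite big_ord1 !mul0r.
have := bin_shift m p (fun _ => 1).
under eq_bigr do rewrite mulr1.
move=> ->; under eq_bigr do rewrite mul1r.
by rewrite bin_sum1 mulr1.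
Qed.

Lemma bin_2nd (M : nat) (p : R) :
  \sum_(j < M.+1) j%:R ^+ 2 * binomial_pmf M p j =
  M%:R * p * (1 - p) + (M%:R * p) ^+ 2.
Proof.
case: M => [|m]; first by rewrite big_ord1 /= expr0n /= !mul0r add0r expr0n.
have := bin_shift m p (fun j => j%:R).
under eq_bigr do rewrite -expr2.
move=> ->.
under eq_bigr do rewrite -addn1 natrD mulrDl mul1r.
rewrite big_split /= bin_mean bin_sum1.
ring.
Qed.
End binom.

Section prob.
Context d (T : measurableType d) (R : realType) (P : probability T R).

Lemma Lfun_indic (A : set T) (r : R) : measurable A -> 0 < r ->
  (\1_A : T -> R) \in Lfun P r%:E.
Proof.
move=> mA r0.
rewrite inE/=; apply/andP; split; rewrite inE/=; first exact: measurable_indic.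
rewrite /finite_norm unlock poweR_lty//.
apply: (@le_lt_trans _ _ (\int[P]_x (cst 1%E) x)%E).
  apply: ge0_le_integral => //.
  - by move=> x _ /=; rewrite lee_fin powR_ge0.
  - apply/measurable_EFinP => /=.
    apply: measurableT_comp (measurable_powR _) _.
    by apply: measurableT_comp => //; exact: measurable_indic.
  - move=> x _ /=; rewrite lee_fin /indic.
    by case: (x \in A); rewrite ?normr1 ?normr0 ?powR1 ?powR0 ?gt_eqF.
by rewrite integral_cst // mul1e; apply: (@le_lt_trans _ _ 1%E) => //; [exact: probability_le1 | exact: ltry].
Qed.

Lemma expectation_sumI (I : Type) (s : seq I) (F : I -> T -> R) :
  (forall i, F i \in Lfun P 1) ->
  ('E_P[\sum_(i <- s) F i] = \sum_(i <- s) 'E_P[F i])%E.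
Proof.
move=> hF; elim: s => [|a s IH]; first by rewrite !big_nil expectation_cst.
rewrite !big_cons expectationD ?IH //.
by apply: rpred_sum => i _.
Qed.


Section main.
Variables (B : nat -> {RV P >-> R}) (M : nat -> nat) (p : nat -> R) (K : nat).
Hypothesis hB : forall k, (2 <= k <= K)%N -> forall j : nat,
  P (B k @^-1` [set j%:R]) = (binomial_pmf (M k) (p k) j)%:E.
Hypothesis hI : mutually_independent P (fun k => (B k : T -> R)) 2 K.

Definition A k (j : nat) := B k @^-1` [set j%:R].

Lemma mA k j : measurable (A k j).
Proof. exact: measurable_funPTI (measurable_set1 _). Qed.

Lemma A_disj k j l : j != l -> A k j `&` A k l = set0.
Proof.
move=> jl; apply/seteqP; split => x //= [] /= h1 h2.
by move: jl; rewrite -(eqr_nat R) -h1 -h2 eqxx.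
Qed.

Definition Y k : T -> R := \sum_(j < (M k).+1) (j%:R \o* \1_(A k j)).

Lemma YE k x : Y k x = \sum_(j < (M k).+1) \1_(A k j) x * j%:R.
Proof. by rewrite /Y fct_sumE. Qed.

Lemma Y_Lfun k r : 1 <= r -> Y k \in Lfun P r%:E.
Proof.
move=> r1; apply: rpred_sum => j _; apply: Lfun_scale => //.
by apply: Lfun_indic; [exact: mA | lra].
Qed.

Lemma scind_Lfun1 (a : R) (C : set T) : measurable C -> (a \o* \1_C) \in Lfun P 1.
Proof. by move=> mC; apply: Lfun_scale => //; apply: Lfun_indic. Qed.

Lemma EY k : (2 <= k <= K)%N -> ('E_P[Y k] = ((M k)%:R * p k)%:E)%E.
Proof.
move=> hk; rewrite expectation_sumI; last by move=> j; apply: scind_Lfun1; exact: mA.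
rewrite (eq_bigr (fun j : 'I_(M k).+1 => (j%:R * (binomial_pmf (M k) (p k) j))%:E)%E); last first.
  move=> j _; rewrite expectationZl; last by apply: Lfun_indic; [exact: mA|lra].
  by rewrite expectation_indic ?hB ?EFinM //; exact: mA.
by rewrite sumEFin bin_mean.
Qed.


Definition w i k (j l : nat) : R :=
  if i == k then (if j == l then binomial_pmf (M i) (p i) j else 0)
  else binomial_pmf (M i) (p i) j * binomial_pmf (M k) (p k) l.

Lemma uniq_ii : uniq (index_iota 2 K.+1).
Proof. by rewrite /index_iota iota_uniq. Qed.

Lemma PAA i k j l : (2 <= i <= K)%N -> (2 <= k <= K)%N ->
  P (A i j `&` A k l) = (w i k j l)%:E.
Proof.
move=> hi hk; rewrite /w; case: eqP => [<-|/eqP ik].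
  case: eqP => [<-|/eqP jl]; first by rewrite setIid hB.
  by rewrite A_disj // measure0.
pose As t := if t == i then [set j%:R] else if t == k then [set l%:R] else [set: R].
have mAs t : measurable (As t).
  by rewrite /As; case: ifP => _; [|case: ifP => _]; exact: measurable_set1 || exact: measurableT.
have := @hI As mAs.
have -> : \bigcap_(t in [set t : nat | (2 <= t <= K)%N]) ((B t : T -> R) @^-1` As t)
          = A i j `&` A k l.
  apply/seteqP; split => x.
  - move=> h; split.
    + by have := h i hi; rewrite /As eqxx.
    + by have := h k hk; rewrite /As eq_sym (negbTE ik) eqxx.
  - move=> [hx1 hx2] t _; rewrite /As; case: ifP => [/eqP->//|_].
    by case: ifP => [/eqP->//|_].
move=> ->.
rewrite (bigD1_seq i) ?mem_index_iota ?uniq_ii //=.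
rewrite -big_filter (bigD1_seq k) ?mem_filter ?mem_index_iota ?filter_uniq ?uniq_ii ?ik //=.
rewrite big1_seq.
  rewrite /As eqxx eq_sym (negbTE ik) eqxx mule1 !hB //.
move=> t /andP[tk]; rewrite mem_filter => /andP[ti _]; rewrite /As (negbTE ti) (negbTE tk) preimage_setT.
exact: probability_setT.
by rewrite eq_sym ik.
Qed.

Lemma YY_fun i k : Y i * Y k =
  \sum_(j < (M i).+1) \sum_(l < (M k).+1) ((j%:R * l%:R) \o* \1_(A i j `&` A k l)).
Proof.
apply/funext => x; rewrite fct_sumE.
have -> : (Y i * Y k) x = Y i x * Y k x by [].
rewrite !YE mulr_suml; apply: eq_bigr => j _; rewrite mulr_sumr fct_sumE.
apply: eq_bigr => l _; rewrite /= indicI /=; ring.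
Qed.

Lemma EYY i k : (2 <= i <= K)%N -> (2 <= k <= K)%N ->
  ('E_P[Y i * Y k] = (\sum_(j < (M i).+1) \sum_(l < (M k).+1)
      w i k j l * j%:R * l%:R)%:E)%E.
Proof.
move=> hi hk; rewrite YY_fun expectation_sumI; last first.
  move=> j; apply: rpred_sum => l _; apply: scind_Lfun1; apply: measurableI; exact: mA.
rewrite -sumEFin; apply: eq_bigr => j _.
rewrite expectation_sumI; last first.
  by move=> l; apply: scind_Lfun1; apply: measurableI; exact: mA.
rewrite -sumEFin; apply: eq_bigr => l _.
have mI : measurable (A i j `&` A k l) by apply: measurableI; exact: mA.
rewrite expectationZl; last by apply: Lfun_indic; [exact: mI|lra].
by rewrite expectation_indic // PAA // -EFinM; congr EFin; ring.
Qed.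


Definition mu k := (M k)%:R * p k.
Definition sm k := mu k * (1 - p k) + mu k ^+ 2.
Definition c i k := if i == k then sm i else mu i * mu k.

Lemma wsum i k : \sum_(j < (M i).+1) \sum_(l < (M k).+1) w i k j l * j%:R * l%:R = c i k.
Proof.
rewrite /c /w; case: eqP => [<-|_].
  rewrite /sm /mu -bin_2nd; apply: eq_bigr => j _.
  rewrite (bigD1 j) //= eqxx big1 ?addr0; first by rewrite expr2; ring.
  move=> l lj; rewrite ifF ?mul0r //; apply/eqP => jl; move/eqP: lj; apply.
  by apply/val_inj; rewrite /= jl.
rewrite /mu -!bin_mean mulr_suml; apply: eq_bigr => j _.
rewrite mulr_sumr; apply: eq_bigr => l _; ring.
Qed.

Definition V : T -> R := \sum_(2 <= k < K.+1) Y k.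

Lemma V_Lfun r : 1 <= r -> V \in Lfun P r%:E.
Proof. by move=> r1; apply: rpred_sum => k _; apply: Y_Lfun. Qed.

Lemma EV : ('E_P[V] = (\sum_(2 <= k < K.+1) mu k)%:E)%E.
Proof.
rewrite expectation_sumI; last by move=> k; apply: Y_Lfun.
rewrite -sumEFin; apply: eq_big_nat => k hk; rewrite EY //.
Qed.

Lemma EV2 : ('E_P[V ^+ 2] = (\sum_(2 <= i < K.+1) \sum_(2 <= k < K.+1) c i k)%:E)%E.
Proof.
have -> : V ^+ 2 = \sum_(2 <= i < K.+1) \sum_(2 <= k < K.+1) (Y i * Y k).
  rewrite expr2 /V mulr_suml; apply: eq_bigr => i _; by rewrite mulr_sumr.
have L1 i k : Y i * Y k \in Lfun P 1.
  by apply: Lfun2_mul_Lfun1; apply: Y_Lfun; lra.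
rewrite expectation_sumI; last by move=> i; apply: rpred_sum => k _.
rewrite -sumEFin; apply: eq_big_nat => i; rewrite ltnS => hi.
rewrite expectation_sumI // -sumEFin; apply: eq_big_nat => k; rewrite ltnS => hk.
by rewrite EYY // wsum.
Qed.

Lemma sum_c : \sum_(2 <= i < K.+1) \sum_(2 <= k < K.+1) c i k =
  (\sum_(2 <= i < K.+1) mu i) ^+ 2 + \sum_(2 <= i < K.+1) mu i * (1 - p i).
Proof.
rewrite expr2 big_distrlr -big_split /=; apply: eq_big_nat => i; rewrite ltnS => hi.
rewrite (bigD1_seq i) ?mem_index_iota ?uniq_ii ?ltnS //=.
rewrite [in RHS](bigD1_seq i) ?mem_index_iota ?uniq_ii ?ltnS //=.
rewrite /c eqxx /sm.
have -> : \sum_(k <- index_iota 2 K.+1 | k != i) (if i == k then sm i else mu i * mu k)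
   = \sum_(k <- index_iota 2 K.+1 | k != i) mu i * mu k.
  by apply: eq_bigr => k ki; rewrite eq_sym (negbTE ki).
rewrite expr2; ring.
Qed.

Lemma VarV : ('V_P[V] = (\sum_(2 <= i < K.+1) mu i * (1 - p i))%:E)%E.
Proof.
rewrite varianceE; last by apply: V_Lfun; lra.
rewrite EV2 EV sum_c -EFin_expe -EFinB; congr EFin; ring.
Qed.


Definition Nk k := ~` \big[setU/set0]_(j < (M k).+1) A k j.

Lemma bigU_mem (n : nat) (F : 'I_n -> set T) x :
  (\big[setU/set0]_(j < n) F j) x -> exists j, F j x.
Proof. by elim/big_rec: _ => [//|j S _ IH] [hj|/IH //]; exists j. Qed.

Lemma Nk_neg k : (2 <= k <= K)%N -> P.-negligible (Nk k).
Proof.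
move=> hk; exists (Nk k); split => //.
  by apply: measurableC; apply: bigsetU_measurable => j _; exact: mA.
rewrite /Nk probability_setC; last by apply: bigsetU_measurable => j _; exact: mA.
rewrite (@measure_bigsetU_ord _ _ _ P _ xpredT (fun j : 'I_(M k).+1 => A k j)).
- rewrite (eq_bigr (fun j : 'I_(M k).+1 => (binomial_pmf (M k) (p k) j)%:E)).
    by rewrite sumEFin bin_sum1 subee.
  by move=> j _; exact: hB.
- by move=> j; exact: mA.
- move=> j l _ _ [x [/= h1 h2]]; apply/val_inj/eqP; rewrite -(eqr_nat R).
  by move: h1 h2; rewrite /A /= => <- <-.
Qed.

Definition N := \big[setU/set0]_(k <- index_iota 2 K.+1) Nk k.

Lemma N_neg : P.-negligible N.
Proof.
rewrite /N big_seq_cond; elim/big_rec: _ => [|k S hk IH].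
  exact: negligible_set0.
apply: negligibleU => //; apply: Nk_neg.
by move: hk; rewrite andbT mem_index_iota ltnS.
Qed.

Lemma YB k x : ~ Nk k x -> Y k x = B k x.
Proof.
move=> nN; have : (\big[setU/set0]_(j < (M k).+1) A k j) x.
  by apply: contrapT.
move=> /bigU_mem [j hj]; rewrite YE (bigD1 j) //= big1.
  by rewrite indicE mem_set // mul1r addr0 hj.
move=> l lj; rewrite indicE memNset ?mul0r //; rewrite /A /= hj => /eqP.
rewrite eqr_nat => /eqP jl; move/eqP: lj; apply; exact/val_inj.
Qed.

Definition U : T -> R := fun x => \sum_(2 <= k < K.+1) B k x.

Lemma N_sup k x : (2 <= k <= K)%N -> Nk k x -> N x.
Proof.
move=> hk hN; rewrite /N.
have : k \in index_iota 2 K.+1 by rewrite mem_index_iota ltnS.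
elim: (index_iota 2 K.+1) => [//|a s IH]; rewrite inE big_cons => /orP[/eqP <-|/IH h].
  by left.
by right.
Qed.

Lemma UV x : ~ N x -> U x = V x.
Proof.
move=> nN; rewrite /U /V fct_sumE; apply: eq_big_nat => k hk; apply/esym/YB.
by move=> hN; apply: nN; apply: (@N_sup k) => //; rewrite -ltnS.
Qed.


Lemma E_ae (f g : T -> R) : measurable_fun setT f -> measurable_fun setT g ->
  (forall x, ~ N x -> f x = g x) -> ('E_P[f] = 'E_P[g])%E.
Proof.
move=> mf mg fg; rewrite unlock; apply: ae_eq_integral => //.
- exact/measurable_EFinP.
- exact/measurable_EFinP.
apply: (negligibleS _ N_neg) => x /= hx.
have [//|nN] := pselect (N x).
by exfalso; apply: hx => _; rewrite fg.
Qed.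

Lemma mU : measurable_fun setT U.
Proof. by apply: measurable_sum => k; exact: measurable_funP. Qed.

Lemma mV : measurable_fun setT V.
Proof.
have := @V_Lfun 1 (lexx _); rewrite inE => /andP[]; rewrite inE /=.
by move=> h _.
Qed.

Lemma EU : ('E_P[U] = 'E_P[V])%E.
Proof. by apply: E_ae; [exact: mU | exact: mV | exact: UV]. Qed.

Lemma VarU : ('V_P[U] = 'V_P[V])%E.
Proof.
rewrite /variance [in LHS]covariance.unlock [in RHS]covariance.unlock EU.
apply: E_ae.
- by apply: measurable_funM; apply: measurable_funB => //; exact: mU.
- by apply: measurable_funM; apply: measurable_funB => //; exact: mV.
move=> x nN; set c := fine _.
have -> : ((U \- cst c) * (U \- cst c)) x = (U x - c) * (U x - c) by [].
have -> : ((V \- cst c) * (V \- cst c)) x = (V x - c) * (V x - c) by [].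
by rewrite UV.
Qed.


Lemma final_prob :
  ('V_P[U] = (\sum_(2 <= i < K.+1) (M i)%:R * p i * (1 - p i))%:E /\
   'E_P[U] = (\sum_(2 <= i < K.+1) (M i)%:R * p i)%:E)%E.
Proof. by rewrite VarU VarV EU EV. Qed.

End main.
End prob.

End Aux.

Lemma tele (R : realType) (f g : nat -> R) (m : nat) :
  (forall k, (2 <= k <= m.+1)%N -> f k <= g k - g k.-1 + 1) ->
  \sum_(2 <= k < m.+2) f k <= g m.+1 - g 1%N + m%:R.
Proof.
elim: m => [|m IH] h.
  by rewrite big_geq // subrr addr0.
rewrite big_nat_recr //=.
have h1 := IH (fun k hk => h k (let: conj a b := andP hk in
   (introT andP (conj a (leq_trans b (leqnSn _)))))).
have h2 := h m.+2 (leqnn _).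
rewrite -natr1.
lra.
Qed.

Lemma n_ge (n : nat -> nat) :
  (forall k, (1 <= k)%N -> (0 < n k)%N) ->
  (forall k, (1 <= k)%N -> (n k < n k.+1)%N) ->
  forall k, (1 <= k)%N -> (k <= n k)%N.
Proof.
move=> h0 h1; elim => [//|k IH] hk.
case: k IH hk => [_ _|k IH _]; first exact: h0.
by apply: leq_ltn_trans (IH _) (h1 _ _).
Qed.

Theorem lemma4 (R : realType) (d : measure_display) (T : measurableType d)
  (P : probability T R) (n : nat -> nat) (K : nat) (s alpha : R)
  (B : nat -> {RV P >-> R}) :
  (forall k, (1 <= k)%N -> (0 < n k)%N) ->
  (forall k, (1 <= k)%N -> (n k < n k.+1)%N) ->
  (2 <= K)%N -> 1 < s -> 0 < alpha < 1 ->
  mutually_independent P (fun k => (B k : T -> R)) 2 K ->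
  (forall k, (2 <= k <= K)%N -> forall j : nat,
     P (B k @^-1` [set j%:R]) =
     (binomial_pmf `|mseq s alpha n k|%N
        (((n k)%:R - (n k.-1)%:R) / (n k)%:R : R) j)%:E) ->
  let U := fun x => \sum_(2 <= k < K.+1) B k x in
  ('V_P[U] < 'E_P[U])%E /\
  ('E_P[U] <= ((mseq s alpha n K + (n K)%:Z - mseq s alpha n 1)%:~R)%:E)%E.
Proof.
move=> n0 ninc K2 s1 /andP[a0 a1] hI hB U0.
pose M := fun k => `|mseq s alpha n k|%N.
pose p := fun k => ((n k)%:R - (n k.-1)%:R) / (n k)%:R : R.
have [hV hE] := @Aux.final_prob d T R P B M p K hB hI.
have -> : U0 = @Aux.U d T R P B K by [].
rewrite hV hE.
have th := theta_gt0 R.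
have z1 := @zeta_ge1 R s s1.
pose L k := ln (riemann_zeta s * (n k)%:R `^ (s + 1) / alpha).
have powge k : (1 <= k)%N -> 1 <= (n k)%:R `^ (s + 1) :> R.
  move=> hk; have e : (1:R) `^ (s + 1) = 1 by rewrite powR1.
  rewrite -{1}e; apply: ge0_ler_powR; rewrite ?nnegrE ?ler0n //; first lra.
  by rewrite (@ler1n R) n0.
have Larg k : (1 <= k)%N -> 1 < riemann_zeta s * (n k)%:R `^ (s + 1) / alpha.
  move=> hk; have h := powge k hk.
  rewrite ltr_pdivlMr // mul1r.
  have : 1 <= riemann_zeta s * (n k)%:R `^ (s + 1) by nra.
  lra.
have Lpos k : (1 <= k)%N -> 0 < L k by move=> hk; apply: ln_gt0; exact: Larg.
have Lmono k : (1 <= k)%N -> L k <= L k.+1.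
  move=> hk; have hk1 : (1 <= k.+1)%N by [].
  rewrite /L ler_ln ?posrE; last 2 first.
  - by apply: lt_trans (Larg _ hk).
  - by apply: lt_trans (Larg _ hk1).
  apply: ler_wpM2r; first by rewrite invr_ge0; lra.
  apply: ler_wpM2l; first lra.
  apply: ge0_ler_powR; rewrite ?nnegrE ?ler0n //; first lra.
  by rewrite (@ler_nat R); apply: ltnW; apply: ninc.
pose x k := (n k)%:R / theta * L k.
have xpos k : (1 <= k)%N -> 0 < x k.
  move=> hk; rewrite /x; apply: mulr_gt0; last exact: Lpos.
  by apply: divr_gt0 => //; rewrite (@ltr0n R) n0.
have Mx k : (1 <= k)%N -> [/\ (M k)%:R = (mseq s alpha n k)%:~R :> R,
    x k <= (M k)%:R & (M k)%:R < x k + 1].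
  move=> hk.
  have m0 : (0 <= mseq s alpha n k)%R.
    rewrite /mseq ceil_ge0; have := xpos k hk; rewrite /x /L; lra.
  have e : (M k)%:R = (mseq s alpha n k)%:~R :> R.
    by rewrite /M -[in RHS](gez0_abs m0).
  split => //; rewrite e.
  - exact: ceil_ge.
  - have := ceilB1_lt (x k); rewrite intrB /=; rewrite /mseq /x /L; lra.
have pge k : (2 <= k)%N -> 0 < p k.
  case: k => // k; case: k => // k _.
  rewrite /p; apply: divr_gt0.
    by rewrite subr_gt0 (@ltr_nat R); apply: ninc.
  by rewrite (@ltr0n R); apply: n0.
have Mpos k : (1 <= k)%N -> 0 < (M k)%:R :> R.
  move=> hk; have [_ h _] := Mx k hk; have := xpos k hk; lra.
split.
  rewrite lte_fin big_ltn // [X in _ < X]big_ltn //.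
  apply: ltr_leD.
    have h1 := pge 2%N isT; have h2 := Mpos 2%N isT.
    have : 0 < (M 2)%:R * p 2 * p 2 by apply: mulr_gt0; first apply: mulr_gt0.
    lra.
  apply: ler_sum_nat => i /andP[hi _]; have := pge i (ltnW hi) => pi.
  have : 0 <= (M i)%:R * p i * p i by apply: mulr_ge0; [apply: mulr_ge0|]; rewrite ?ler0n ?ltW.
  lra.
rewrite lee_fin.
have term k : (2 <= k <= K)%N -> (M k)%:R * p k <= (M k)%:R - (M k.-1)%:R + 1.
  case: k => // k; case: k => // k /andP[_ _].
  have hk1 : (1 <= k.+1)%N by [].
  have hk2 : (1 <= k.+2)%N by [].
  rewrite /=.
  have [_ hx _] := Mx k.+2 hk2.
  have [_ _ hx1] := Mx k.+1 hk1.
  have lm := Lmono k.+1 hk1.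
  have a0' : 0 < (n k.+1)%:R :> R by rewrite (@ltr0n R) n0.
  have b0 : 0 < (n k.+2)%:R :> R by rewrite (@ltr0n R) n0.
  set a := (n k.+1)%:R in a0' hx1 *.
  set b := (n k.+2)%:R in b0 hx *.
  set Mk := (M k.+2)%:R in hx *.
  set M1 := (M k.+1)%:R in hx1 *.
  have h1 : 0 <= a * (Mk - x k.+2) by apply: mulr_ge0; lra.
  have h2 : 0 <= b * (x k.+1 + 1 - M1) by apply: mulr_ge0; lra.
  have h3 : 0 <= a * b * (L k.+2 / theta - L k.+1 / theta).
    apply: mulr_ge0; first by apply: mulr_ge0; lra.
    rewrite -mulrBl; apply: mulr_ge0; first lra.
    by rewrite invr_ge0; lra.
  have e : Mk * p k.+2 = Mk - Mk * a / b.
    by rewrite /p -/a -/b; field; lra.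
  rewrite e.
  suff : M1 - 1 <= Mk * a / b by lra.
  rewrite ler_pdivlMr //.
  move: h1 h2 h3; rewrite /x -/a -/b.
  move=> h1 h2 h3; nra.
have [m hm] : exists m, K = m.+1 by exists K.-1; rewrite prednK // ltnW.
subst K.
have := @tele R (fun k => (M k)%:R * p k) (fun k => (M k)%:R) m term.
move=> /le_trans; apply.
have [e1 _ _] := Mx 1%N isT.
have [e2 _ _] := Mx m.+1 isT.
have hn := @n_ge n n0 ninc m.+1 isT.
rewrite /= e1 e2 intrB intrD -pmulrn.
have : m%:R <= (n m.+1)%:R :> R by rewrite (@ler_nat R) ltnW.
lra.
Qed.
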